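(* Let $\mathcal{V}$ be a non-trivial quantale, let $\mathsf{F}\colon\mathbf{Set}\to\mathbf{Set}$ be a functor, and let $\overline{\mathsf{F}}\colon\mathbf{Cat}(\mathcal{V})\to\mathbf{Cat}(\mathcal{V})$ be any lifting of $\mathsf{F}$. Then $\overline{\mathsf{F}}$ is topological with respect to some class $\Lambda$ of natural transformations of the form $\lambda\colon \mathbf{Cat}(\mathcal{V})(-,A_\lambda)\to \mathbf{Set}(\mathsf{F}|-|,|\mathcal{V}|)$, where each $A_\lambda$ is a $\mathcal{V}$-category. That is, for every $\mathcal{V}$-category $X$, the structure of $\overline{\mathsf{F}}X$ is the initial structure on $\mathsf{F}|X|$ with respect to the structured cone of all maps $\lambda_X(f)\colon \mathsf{F}|X|\to|\mathcal{V}|$, where $\lambda$ ranges over $\Lambda$ and $f$ over all $\mathcal{V}$-functors $X\to A_\lambda$.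
   Context: A (commutative unital) quantale $(\mathcal{V},\otimes,k)$ is a complete lattice with a commutative monoid structure $(\otimes,k)$ such that each $u\otimes-$ preserves all joins; $\hom(u,-)$ denotes the right adjoint of $u\otimes-$. It is non-trivial if $\bot\neq\top$. A $\mathcal{V}$-category is a set $X$ with $a\colon X\times X\to\mathcal{V}$ such that $k\le a(x,x)$ and $a(x,y)\otimes a(y,z)\le a(x,z)$; a $\mathcal{V}$-functor $f\colon(X,a)\to(Y,b)$ is a map with $a(x,y)\le b(f(x),f(y))$; these form the category $\mathbf{Cat}(\mathcal{V})$ with forgetful functor $|-|$ to $\mathbf{Set}$. $\mathcal{V}$ is regarded as the $\mathcal{V}$-category $(\mathcal{V},\hom)$. Given a set $Z$ and maps $f_i\colon Z\to|(X_i,a_i)|$, the initial structure on $Z$ is $a(x,y)=\bigwedge_i a_i(f_i(x),f_i(y))$. A lifting of $\mathsf{F}$ to $\mathbf{Cat}(\mathcal{V})$ is a functor $\overline{\mathsf{F}}$ with $|-|\cdot\overline{\mathsf{F}}=\mathsf{F}\cdot|-|$. *)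

(* Defs.v *)
Set Implicit Arguments.
Unset Strict Implicit.

Record Quantale := {
  qV :> Type;
  qle : qV -> qV -> Prop;
  qle_refl : forall x, qle x x;
  qle_trans : forall x y z, qle x y -> qle y z -> qle x z;
  qle_antisym : forall x y, qle x y -> qle y x -> x = y;
  qsup : (qV -> Prop) -> qV;
  qsup_ub : forall (S : qV -> Prop) x, S x -> qle x (qsup S);
  qsup_least : forall (S : qV -> Prop) y, (forall x, S x -> qle x y) -> qle (qsup S) y;
  qtensor : qV -> qV -> qV;
  qk : qV;
  qtensor_assoc : forall x y z, qtensor x (qtensor y z) = qtensor (qtensor x y) z;
  qtensor_comm : forall x y, qtensor x y = qtensor y x;
  qtensor_unit : forall x, qtensor qk x = x;
  qtensor_sup : forall u (S : qV -> Prop),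
    qtensor u (qsup S) = qsup (fun w => exists s, S s /\ w = qtensor u s)
}.

Section QDefs.
Variable Q : Quantale.
Definition qinf (S : Q -> Prop) : Q := qsup (fun x => forall s, S s -> qle x s).
Definition qbot : Q := qsup (fun _ => False).
Definition qtop : Q := qsup (fun _ => True).
Definition qhom (u v : Q) : Q := qsup (fun w => qle (qtensor u w) v).
Definition nontrivial : Prop := qbot <> qtop.

Record VCat := {
  vcarrier :> Type;
  vhom : vcarrier -> vcarrier -> Q;
  vrefl : forall x, qle (qk Q) (vhom x x);
  vtrans : forall x y z, qle (qtensor (vhom x y) (vhom y z)) (vhom x z)
}.

Record VFun (X Y : VCat) := {
  vmap :> X -> Y;
  vmono : forall x y, qle (vhom x y) (vhom (vmap x) (vmap y))
}.

Definition vcomp (X Y Z : VCat) (g : VFun Y Z) (f : VFun X Y) : VFun X Z.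
Proof.
  refine {| vmap := fun x => g (f x) |}.
  intros x y. eapply qle_trans; [apply (vmono f) | apply (vmono g)].
Defined.
End QDefs.

Record SetFunctor := {
  fobj :> Type -> Type;
  fmap : forall A B : Type, (A -> B) -> fobj A -> fobj B;
  fmap_id : forall (A : Type) (x : fobj A), fmap (fun a : A => a) x = x;
  fmap_comp : forall (A B C : Type) (f : A -> B) (g : B -> C) (x : fobj A),
    fmap (fun a => g (f a)) x = fmap g (fmap f x)
}.

(** A lifting of F to Cat(V): a functor Fbar with |-| . Fbar = F . |-|.
    Such a functor sends X to (F|X|, lstr X) and a V-functor f to F f;
    functoriality is then inherited from F. *)
Arguments fmap s [A B] _ _.
Unset Implicit Arguments.
Record Lifting (Q : Quantale) (F : SetFunctor) := {
  lstr : forall X : VCat Q, F X -> F X -> Q;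
  lrefl : forall (X : VCat Q) (u : F X), qle (qk Q) (lstr X u u);
  ltrans : forall (X : VCat Q) (u v w : F X),
    qle (qtensor (lstr X u v) (lstr X v w)) (lstr X u w);
  lfun : forall (X Y : VCat Q) (f : VFun X Y) (u v : F X),
    qle (lstr X u v) (lstr Y (fmap F (vmap f) u) (fmap F (vmap f) v))
}.

(* Main.v *)
Require Import Defs.

Section Aux.
Variable Q : Quantale.

Lemma tens_mono (a b c : Q) : qle a b -> qle (qtensor c a) (qtensor c b).
Proof.
  intro Hab.
  assert (E : qsup (fun w => w = a \/ w = b) = b).
  { apply qle_antisym.
    - apply qsup_least. intros x [->| ->]; [exact Hab | apply qle_refl].
    - apply qsup_ub. right; reflexivity. }
  rewrite <- E, qtensor_sup. apply qsup_ub. exists a. split; auto.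
Qed.

Lemma hom_adj1 (a b c : Q) : qle (qtensor a c) b -> qle c (qhom a b).
Proof. intro H. unfold qhom. apply qsup_ub. exact H. Qed.

Lemma hom_adj2 (a b c : Q) : qle c (qhom a b) -> qle (qtensor a c) b.
Proof.
  intro H. eapply qle_trans. apply tens_mono, H.
  unfold qhom. rewrite qtensor_sup. apply qsup_least.
  intros x [s [Hs ->]]. exact Hs.
Qed.

Lemma inf_lb (S : Q -> Prop) s : S s -> qle (qinf S) s.
Proof. intro Hs. unfold qinf. apply qsup_least. intros x Hx. apply Hx, Hs. Qed.

Lemma inf_glb (S : Q -> Prop) x : (forall s, S s -> qle x s) -> qle x (qinf S).
Proof. intro H. unfold qinf. apply qsup_ub. exact H. Qed.
End Aux.

Definition vid (Q : Quantale) (X : VCat Q) : VFun X X :=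
  {| vmap := fun x => x; vmono := fun x y => qle_refl _ |}.

Theorem theorem2 (Q : Quantale) (HQ : nontrivial Q) (F : SetFunctor)
  (L : Lifting Q F) :
  exists (Lam : Type) (A : Lam -> VCat Q)
    (lam : forall (l : Lam) (X : VCat Q), VFun X (A l) -> F X -> Q),
    (* each lam l is a natural transformation Cat(V)(-,A l) -> Set(F|-|,|V|) *)
    (forall (l : Lam) (X Y : VCat Q) (g : VFun Y X) (f : VFun X (A l)) (u : F Y),
        lam l Y (vcomp f g) u = lam l X f (fmap F (vmap g) u)) /\
    (* the structure of Fbar X is initial w.r.t. all lam_X(f) : F|X| -> |V| *)
    (forall (X : VCat Q) (u v : F X),
        lstr Q F L X u v =
        qinf (fun w => exists (l : Lam) (f : VFun X (A l)),
                 w = qhom (lam l X f u) (lam l X f v))).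
Proof.
  exists {Z : VCat Q & F Z}, (fun l => projT1 l).
  exists (fun l X f u => lstr Q F L (projT1 l) (projT2 l) (fmap F (vmap f) u)).
  split.
  - intros [Z z] X Y g f u. simpl. f_equal.
    exact (fmap_comp (vmap g) (vmap f) u).
  - intros X u v. apply qle_antisym.
    + apply inf_glb. intros s [[Z z] [f ->]]. simpl.
      apply hom_adj1.
      eapply qle_trans; [| apply (ltrans Q F L Z z (fmap F (vmap f) u))].
      apply tens_mono. apply lfun.
    + eapply qle_trans.
      * apply inf_lb. exists (existT _ X u), (@vid Q X). reflexivity.
      * simpl. rewrite !(@fmap_id F).
        set (h := qhom _ _).
        rewrite <- (qtensor_unit h).
        eapply qle_trans; [| apply (@hom_adj2 Q (lstr Q F L X u u) _ h (qle_refl _))].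
        rewrite (qtensor_comm (qk Q)), (qtensor_comm (lstr Q F L X u u)).
        apply tens_mono, lrefl.
Qed.
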